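(* (1) $Z(G_n)=\{e\}$. (2) $Z(\mathbb{T}^n\ltimes\mathrm{Inn}(\mathbb{S}_n))=\{e\}$. (3) $Z(\mathrm{Inn}(\mathbb{S}_n))=\{e\}$. (4) $Z(S_n\ltimes\mathbb{T}^n)=\{t_{(\lambda,\dots,\lambda)}\mid\lambda\in K^*\}\simeq\mathbb{T}^1$. (5) $Z(S_n\ltimes\mathrm{Inn}(\mathbb{S}_n))=\{e\}$.
   Context: $K$ is a field of characteristic zero. $\mathbb{S}_n$ is the $K$-algebra generated by $x_1,\dots,x_n,y_1,\dots,y_n$ with defining relations $y_ix_i=1$ and $[x_i,y_j]=[x_i,x_j]=[y_i,y_j]=0$ for $i\ne j$; $G_n=\mathrm{Aut}_{K\text{-alg}}(\mathbb{S}_n)$. $\mathbb{T}^n=\{t_\lambda\}$ with $t_\lambda(x_i)=\lambda_ix_i$, $t_\lambda(y_i)=\lambda_i^{-1}y_i$; $S_n$ acts by $\tau(x_i)=x_{\tau(i)}$, $\tau(y_i)=y_{\tau(i)}$; $\mathrm{Inn}(\mathbb{S}_n)$ is the group of inner automorphisms. $Z(H)$ denotes the centre of a group $H$; all these are subgroups of $G_n$. *)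

(* Defs.v *)
From HB Require Import structures.
From mathcomp Require Import all_boot all_order all_algebra all_fingroup.
Set Implicit Arguments. Unset Strict Implicit. Unset Printing Implicit Defensive.
Import GRing.Theory.
Local Open Scope ring_scope.

Section Jacobson.
Variable K : fieldType.

Definition is_alg_hom (A B : algType K) (f : A -> B) : Prop :=
  (forall (k : K) (a b : A), f (k *: a + b) = k *: f a + f b) /\
  (forall a b : A, f (a * b) = f a * f b) /\ f 1 = 1.

Definition jacobson_rel (n : nat) (B : algType K) (x y : 'I_n -> B) : Prop :=
  (forall i, y i * x i = 1) /\
  (forall i j, i != j ->
     [/\ x i * y j = y j * x i, x i * x j = x j * x i & y i * y j = y j * y i]).

(* (A, x, y) is the K-algebra generated by x_i, y_i with the defining
   relations above: universal property of the presentation. *)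
Definition jacobson_presentation (n : nat) (A : algType K) (x y : 'I_n -> A) : Prop :=
  jacobson_rel x y /\
  forall (B : algType K) (u v : 'I_n -> B), jacobson_rel u v ->
    exists f : A -> B,
      [/\ is_alg_hom f, (forall i, f (x i) = u i /\ f (y i) = v i) &
          forall g : A -> B, is_alg_hom g -> (forall i, g (x i) = u i /\ g (y i) = v i) ->
            forall a, g a = f a].

Variable A : algType K.

Definition is_autom (s : A -> A) : Prop := is_alg_hom s /\ bijective s.

Definition in_torus (n : nat) (x y : 'I_n -> A) (s : A -> A) : Prop :=
  is_autom s /\ exists lam : 'I_n -> K, (forall i, lam i != 0) /\
    forall i, s (x i) = lam i *: x i /\ s (y i) = (lam i)^-1 *: y i.

Definition in_sym (n : nat) (x y : 'I_n -> A) (s : A -> A) : Prop :=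
  is_autom s /\ exists p : 'S_n, forall i, s (x i) = x (p i) /\ s (y i) = y (p i).

Definition in_inn (s : A -> A) : Prop :=
  exists u v : A, [/\ u * v = 1, v * u = 1 & forall a, s a = u * a * v].

(* Product set P Q = { p o q } (internal semidirect product as a set). *)
Definition prod_set (P Q : (A -> A) -> Prop) (s : A -> A) : Prop :=
  exists p q, [/\ P p, Q q & forall a, s a = p (q a)].

Definition in_centre (H : (A -> A) -> Prop) (s : A -> A) : Prop :=
  H s /\ forall t, H t -> forall a, s (t a) = t (s a).

Definition trivial_centre (H : (A -> A) -> Prop) : Prop :=
  forall s, in_centre H s <-> (forall a, s a = a).

End Jacobson.

(* Main.v *)
Require Import Defs.
From HB Require Import structures.
From mathcomp Require Import all_boot all_order all_algebra all_fingroup.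
From Stdlib Require Import ClassicalEpsilon FunctionalExtensionality ProofIrrelevance.
Import GRing.Theory.
Local Open Scope ring_scope.

Set Implicit Arguments. Unset Strict Implicit. Unset Printing Implicit Defensive.

Module T1.

Definition cbool (P : Prop) : bool :=
  if excluded_middle_informative P then true else false.
Lemma cboolP (P : Prop) : reflect P (cbool P).
Proof. by rewrite /cbool; case: excluded_middle_informative => h; constructor. Qed.

Definition cfind (T : Type) (Q : pred T) (n : nat) : option T :=
  match excluded_middle_informative (exists x, Q x) with
  | left h => Some (proj1_sig (constructive_indefinite_description _ h))
  | right _ => None end.

Lemma cfind_correct T (Q : pred T) n x : cfind Q n = Some x -> Q x.
Proof.
rewrite /cfind; case: excluded_middle_informative => // h [<-].
by case: constructive_indefinite_description.
Qed.
Lemma cfind_complete T (Q : pred T) : (exists x, Q x) -> exists n, cfind Q n.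
Proof. by move=> h; exists 0%N; rewrite /cfind; case: excluded_middle_informative. Qed.
Lemma cfind_ext T (Q R : pred T) : Q =1 R -> cfind Q =1 cfind R.
Proof. by move=> /functional_extensionality -> . Qed.

Lemma cbool_eqP (T : Type) : Equality.axiom (fun a b : T => cbool (a = b)).
Proof. by move=> a b; apply: cboolP. Qed.

Section VMod.
Variables (K : fieldType) (I : Type).
Definition fV := I -> K.
HB.instance Definition _ := hasDecEq.Build fV (@cbool_eqP fV).
HB.instance Definition _ := hasChoice.Build fV (@cfind_correct fV) (@cfind_complete fV) (@cfind_ext fV).
Definition fV0 : fV := fun _ => 0.
Definition fVopp (f : fV) : fV := fun i => - f i.
Definition fVadd (f g : fV) : fV := fun i => f i + g i.
Definition fVscale (k : K) (f : fV) : fV := fun i => k * f i.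
Lemma fVaddA : associative fVadd.
Proof. by move=> f g h; apply: functional_extensionality => i; rewrite /fVadd addrA. Qed.
Lemma fVaddC : commutative fVadd.
Proof. by move=> f g; apply: functional_extensionality => i; rewrite /fVadd addrC. Qed.
Lemma fVadd0 : left_id fV0 fVadd.
Proof. by move=> f; apply: functional_extensionality => i; rewrite /fVadd /fV0 add0r. Qed.
Lemma fVaddN : left_inverse fV0 fVopp fVadd.
Proof. by move=> f; apply: functional_extensionality => i; rewrite /fVadd /fV0 /fVopp addNr. Qed.
HB.instance Definition _ := GRing.isZmodule.Build fV fVaddA fVaddC fVadd0 fVaddN.
Lemma fVscaleA a b (v : fV) : fVscale a (fVscale b v) = fVscale (a * b) v.
Proof. by apply: functional_extensionality => i; rewrite /fVscale mulrA. Qed.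
Lemma fVscale1 : left_id 1 fVscale.
Proof. by move=> v; apply: functional_extensionality => i; rewrite /fVscale mul1r. Qed.
Lemma fVscaleDr : right_distributive fVscale +%R.
Proof. by move=> a u v; apply: functional_extensionality => i; rewrite /fVscale /= /fVadd mulrDr. Qed.
Lemma fVscaleDl (v : fV) : {morph fVscale^~ v: a b / a + b}.
Proof. by move=> a b; apply: functional_extensionality => i; rewrite /fVscale /= /fVadd mulrDl. Qed.
HB.instance Definition _ := GRing.Zmodule_isLmodule.Build K fV fVscaleA fVscale1 fVscaleDr fVscaleDl.
Lemma fVE_add (f g : fV) i : (f + g) i = f i + g i. Proof. by []. Qed.
Lemma fVE_scale k (f : fV) i : (k *: f) i = k * f i. Proof. by []. Qed.
Lemma fVE_0 i : (0 : fV) i = 0. Proof. by []. Qed.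
Lemma fVE_opp (f : fV) i : (- f) i = - f i. Proof. by []. Qed.
End VMod.


End T1.
Import T1.

Module T2.

Section Op.
Variables (K : fieldType) (W : lmodType K) (P : W -> Prop).
Record goodP : Prop := GoodP { P0 : P 0; PD : forall u v, P u -> P v -> P (u + v);
  PZ : forall k u, P u -> P (k *: u); Wnt : exists w : W, w != 0 }.
Variable hP : goodP.
Record op (hP' : goodP) := Op { app :> W -> W;
  app_lin : forall k u v, app (k *: u + v) = k *: app u + app v;
  app_P : forall w, P w -> P (app w) }.

Lemma op_ext (f g : op hP) : (forall w, f w = g w) -> f = g.
Proof.
case: f g => f lf pf [g lg pg] /= h.
have e : f = g by apply: functional_extensionality.
subst g; congr Op; apply: proof_irrelevance.
Qed.

HB.instance Definition _ := hasDecEq.Build (op hP) (@cbool_eqP (op hP)).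
HB.instance Definition _ := hasChoice.Build (op hP) (@cfind_correct (op hP)) (@cfind_complete (op hP)) (@cfind_ext (op hP)).

Lemma app_add (f : op hP) u v : f (u + v) = f u + f v.
Proof. by have := app_lin f 1 u v; rewrite !scale1r. Qed.
Lemma app_scale (f : op hP) k u : f (k *: u) = k *: f u.
Proof.
have h0 : f 0 = 0.
  by have := app_lin f 1 0 0; rewrite !scale1r addr0 => /(congr1 (fun z => z - f 0)); rewrite subrr addrK => <-.
by have := app_lin f k u 0; rewrite !addr0 h0 addr0.
Qed.

Definition op0 : op hP.
refine (@Op hP (fun _ => 0) _ _).
- by move=> k u v; rewrite scaler0 addr0.
- by move=> *; apply: (P0 hP).
Defined.
Definition opopp (f : op hP) : op hP.
refine (@Op hP (fun w => - f w) _ _).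
- by move=> k u v; rewrite app_lin opprD scalerN.
- by move=> w Pw; rewrite -scaleN1r; apply/(PZ hP)/app_P.
Defined.
Definition opadd (f g : op hP) : op hP.
refine (@Op hP (fun w => f w + g w) _ _).
- by move=> k u v; rewrite !app_lin scalerDr addrACA.
- by move=> w Pw; apply: (PD hP); apply: app_P.
Defined.
Definition opone : op hP.
refine (@Op hP (fun w => w) _ _) => //.
Defined.
Definition opmul (f g : op hP) : op hP.
refine (@Op hP (fun w => f (g w)) _ _).
- by move=> k u v; rewrite !app_lin.
- by move=> w Pw; do 2 apply: app_P.
Defined.
Definition opscale (k : K) (f : op hP) : op hP.
refine (@Op hP (fun w => k *: f w) _ _).
- by move=> a u v; rewrite app_lin scalerDr !scalerA mulrC.
- by move=> w Pw; apply/(PZ hP)/app_P.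
Defined.

Lemma opaddA : associative opadd.
Proof. by move=> f g h; apply: op_ext => w /=; rewrite addrA. Qed.
Lemma opaddC : commutative opadd.
Proof. by move=> f g; apply: op_ext => w /=; rewrite addrC. Qed.
Lemma opadd0 : left_id op0 opadd.
Proof. by move=> f; apply: op_ext => w /=; rewrite add0r. Qed.
Lemma opaddN : left_inverse op0 opopp opadd.
Proof. by move=> f; apply: op_ext => w /=; rewrite addNr. Qed.
HB.instance Definition _ := GRing.isZmodule.Build (op hP) opaddA opaddC opadd0 opaddN.

Lemma opmulA : associative opmul. Proof. by move=> f g h; apply: op_ext. Qed.
Lemma opmul1 : left_id opone opmul. Proof. by move=> f; apply: op_ext. Qed.
Lemma opmul1r : right_id opone opmul. Proof. by move=> f; apply: op_ext. Qed.
Lemma opmulDl : left_distributive opmul +%R.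
Proof. by move=> f g h; apply: op_ext. Qed.
Lemma opmulDr : right_distributive opmul +%R.
Proof. by move=> f g h; apply: op_ext => w /=; rewrite app_add. Qed.
Lemma opone_neq0 : opone != 0.
Proof.
apply/eqP => h; case: (Wnt hP) => w /eqP; apply.
by have /= := congr1 (fun f : op hP => app f w) h.
Qed.
HB.instance Definition _ := GRing.Zmodule_isNzRing.Build (op hP) opmulA opmul1 opmul1r opmulDl opmulDr opone_neq0.

Lemma opscaleA a b (v : op hP) : opscale a (opscale b v) = opscale (a * b) v.
Proof. by apply: op_ext => w /=; rewrite scalerA. Qed.
Lemma opscale1 : left_id 1 opscale.
Proof. by move=> v; apply: op_ext => w /=; rewrite scale1r. Qed.
Lemma opscaleDr : right_distributive opscale +%R.
Proof. by move=> a u v; apply: op_ext => w /=; rewrite scalerDr. Qed.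
Lemma opscaleDl (v : op hP) : {morph opscale^~ v: a b / a + b}.
Proof. by move=> a b; apply: op_ext => w /=; rewrite scalerDl. Qed.
HB.instance Definition _ := GRing.Zmodule_isLmodule.Build K (op hP) opscaleA opscale1 opscaleDr opscaleDl.
Lemma opscaleAl (a : K) (u v : op hP) : a *: (u * v) = (a *: u) * v.
Proof. by apply: op_ext. Qed.
HB.instance Definition _ := GRing.Lmodule_isLalgebra.Build K (op hP) opscaleAl.
Lemma opscaleAr (a : K) (u v : op hP) : a *: (u * v) = u * (a *: v).
Proof. by apply: op_ext => w /=; rewrite app_scale. Qed.
HB.instance Definition _ := GRing.Lalgebra_isAlgebra.Build K (op hP) opscaleAr.

Lemma opE_add (f g : op hP) w : (f + g) w = f w + g w. Proof. by []. Qed.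
Lemma opE_mul (f g : op hP) w : (f * g) w = f (g w). Proof. by []. Qed.
Lemma opE_scale k (f : op hP) w : (k *: f) w = k *: f w. Proof. by []. Qed.
Lemma opE_1 w : (1 : op hP) w = w. Proof. by []. Qed.
Lemma opE_0 w : (0 : op hP) w = 0. Proof. by []. Qed.
Lemma opE_opp (f : op hP) w : (- f) w = - f w. Proof. by []. Qed.
End Op.


End T2.
Import T2.

Module T3.

Section AlgHom.
Variables (K : fieldType) (A B : algType K) (f : A -> B) (hf : is_alg_hom f).
Lemma ahD a b : f (a + b) = f a + f b.
Proof. by case: hf => h _; have := h 1 a b; rewrite !scale1r. Qed.
Lemma ah0 : f 0 = 0.
Proof. by have := ahD 0 0; rewrite addr0 => /(congr1 (fun z => z - f 0)); rewrite subrr addrK => <-. Qed.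
Lemma ahZ k a : f (k *: a) = k *: f a.
Proof. by case: hf => h _; have := h k a 0; rewrite !addr0 ah0 addr0. Qed.
Lemma ahN a : f (- a) = - f a.
Proof. by rewrite -scaleN1r ahZ scaleN1r. Qed.
Lemma ahB a b : f (a - b) = f a - f b.
Proof. by rewrite ahD ahN. Qed.
Lemma ahM a b : f (a * b) = f a * f b.
Proof. by case: hf => _ []. Qed.
Lemma ah1 : f 1 = 1.
Proof. by case: hf => _ []. Qed.
Lemma ah_sum I r (F : I -> A) : f (\sum_(i <- r) F i) = \sum_(i <- r) f (F i).
Proof. by elim: r => [|i r IH]; rewrite ?big_nil ?ah0 // !big_cons ahD IH. Qed.
Lemma ah_prod I r (F : I -> A) : f (\prod_(i <- r) F i) = \prod_(i <- r) f (F i).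
Proof. by elim: r => [|i r IH]; rewrite ?big_nil ?ah1 // !big_cons ahM IH. Qed.
Lemma ahX a k : f (a ^+ k) = f a ^+ k.
Proof. by elim: k => [|k IH]; rewrite ?expr0 ?ah1 // !exprS ahM IH. Qed.
Lemma ahA k : f (k%:A) = k%:A.
Proof. by rewrite ahZ ah1. Qed.
End AlgHom.

Lemma ah_comp (K : fieldType) (A B C : algType K) (f : B -> C) (g : A -> B) :
  is_alg_hom f -> is_alg_hom g -> is_alg_hom (fun a => f (g a)).
Proof.
move=> hf hg; split; last split.
- by move=> k a b; rewrite (ahD hg) (ahZ hg) (ahD hf) (ahZ hf).
- by move=> a b; rewrite (ahM hg) (ahM hf).
- by rewrite (ah1 hg) (ah1 hf).
Qed.
Lemma ah_id (K : fieldType) (A : algType K) : is_alg_hom (fun a : A => a).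
Proof. by []. Qed.
Lemma ah_ext (K : fieldType) (A B : algType K) (f g : A -> B) :
  is_alg_hom f -> (forall a, g a = f a) -> is_alg_hom g.
Proof.
move=> [h1 [h2 h3]] e; split; last split.
- by move=> k a b; rewrite !e.
- by move=> a b; rewrite !e.
- by rewrite e.
Qed.

Section MI.
Variable n : nat.
Definition mi := {ffun 'I_n -> nat}.
Definition mzero : mi := [ffun => 0%N].
Definition madd (a b : mi) : mi := [ffun j => (a j + b j)%N].
Definition msub (a b : mi) : mi := [ffun j => (a j - b j)%N].
Definition ue (i : 'I_n) (k : nat) : mi := [ffun j => if j == i then k else 0%N].
Definition mle (a b : mi) : bool := [forall j, a j <= b j]%N.
End MI.

End T3.
Import T3.

Module T4.

Section Rep.
Variables (K : fieldType) (n : nat).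
Local Notation mi := (mi n).
Definition V := fV K mi.
Definition dl (g : mi) : V := fun h => (h == g)%:R.

Lemma V_nt : exists w : V, w != 0.
Proof.
exists (dl (mzero n)); apply/eqP => /(congr1 (fun f : V => f (mzero n))).
by rewrite /dl eqxx fVE_0 => /eqP; rewrite oner_eq0.
Qed.
Lemma hV : goodP (fun _ : V => True).
Proof. by split=> //; exact: V_nt. Qed.
Definition OV := op hV.

Definition mkop (F : V -> V) (hF : forall k u v, F (k *: u + v) = k *: F u + F v) : OV :=
  @Op _ _ _ hV F hF (fun _ _ => I).

Definition uv (i : 'I_n) : mi := ue i 1.

Definition Xfun (i : 'I_n) (f : V) : V := fun g => (0 < g i)%N%:R * f (msub g (uv i)).
Definition Yfun (i : 'I_n) (f : V) : V := fun g => f (madd g (uv i)).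
Lemma Xlin i k u v : Xfun i (k *: u + v) = k *: Xfun i u + Xfun i v.
Proof.
apply: functional_extensionality => g.
by rewrite /Xfun !fVE_add !fVE_scale mulrDr mulrCA.
Qed.
Lemma Ylin i k u v : Yfun i (k *: u + v) = k *: Yfun i u + Yfun i v.
Proof. by apply: functional_extensionality => g. Qed.
Definition Xop i := mkop (Xlin i).
Definition Yop i := mkop (Ylin i).

Lemma opextV (f g : OV) : (forall w h, f w h = g w h) -> f = g.
Proof. by move=> e; apply: op_ext => w; apply: functional_extensionality => h; apply: e. Qed.

Lemma uvE (i j : 'I_n) : uv i j = if j == i then 1%N else 0%N.
Proof. by rewrite ffunE. Qed.
Lemma maddE (a b : mi) j : madd a b j = (a j + b j)%N. Proof. by rewrite ffunE. Qed.
Lemma msubE (a b : mi) j : msub a b j = (a j - b j)%N. Proof. by rewrite ffunE. Qed.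
Definition miE := (uvE, maddE, msubE).
Lemma ffE (a b : mi) : (forall j, a j = b j) -> a = b.
Proof. by move=> e; apply/ffunP => j; apply: e. Qed.

Lemma rel_V : jacobson_rel Xop Yop.
Proof.
split.
- move=> i; apply: opextV => w h /=.
  rewrite /Yfun /Xfun /= !ffunE eqxx addn1 ltn0Sn mul1r; congr w.
  by apply: ffE => j; rewrite !ffunE; case: (j == i); rewrite ?addn1 ?subn1 ?addn0 ?subn0.
- move=> i j ij; split; apply: opextV => w h /=; rewrite /Yfun /Xfun /= ?miE.
  + rewrite (negbTE ij) addn0; have [hi|hi] := posnP (h i); first by rewrite !mul0r.
    congr (_ * w _); apply: ffE => k; rewrite !miE.
    case: ifP => [/eqP ki|_]; last by rewrite !subn0.
    subst k; case: ifP => [/eqP e|_]; first by move: ij; rewrite e eqxx.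
    by rewrite !addn0.
  + case: ifP => [/eqP e|_]; first by move: ij; rewrite e eqxx.
    case: ifP => [/eqP e|_]; first by move: ij; rewrite e eqxx.
    rewrite !subn0 mulrCA; congr (_ * (_ * w _)); apply: ffE => k; rewrite !miE; exact: subnAC.
  + by congr w; apply: ffE => k; rewrite !miE addnAC.
Qed.
End Rep.

End T4.
Import T4.

Module T5.

Section RepF.
Variables (K : fieldType) (n : nat).
Local Notation mi := (mi n).
Local Notation OV := (OV K n).

Lemma ueE (i j : 'I_n) k : ue i k j = if j == i then k else 0%N.
Proof. by rewrite ffunE. Qed.

Lemma bRM (b1 b2 : bool) : (b1%:R : K) * b2%:R = (b1 && b2)%:R.
Proof. by case: b1; case: b2; rewrite ?mul1r ?mul0r. Qed.

Lemma XopE i (w : V K n) h : (Xop K i : OV) w h = (0 < h i)%N%:R * w (msub h (uv i)).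
Proof. by []. Qed.
Lemma YopE i (w : V K n) h : (Yop K i : OV) w h = w (madd h (uv i)).
Proof. by []. Qed.

Lemma XpowE i k (w : V K n) h :
  ((Xop K i : OV) ^+ k) w h = (k <= h i)%N%:R * w (msub h (ue i k)).
Proof.
elim: k w h => [|k IH] w h.
  rewrite expr0 opE_1 leq0n mul1r; congr w; apply: ffE => j; rewrite !miE ueE.
  by case: ifP; rewrite subn0.
rewrite exprS opE_mul XopE IH; case e: (h i) => [|m].
  by rewrite !mul0r.
rewrite mul1r msubE e uvE eqxx subn1 /= ltnS; congr (_ * w _).
apply: ffE => j; rewrite !miE !ueE; case: ifP => [/eqP ->|_]; last by rewrite !subn0.
by rewrite e subn1 /= subSS.
Qed.

Lemma YpowE i k (w : V K n) h :
  ((Yop K i : OV) ^+ k) w h = w (madd h (ue i k)).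
Proof.
elim: k w h => [|k IH] w h.
  rewrite expr0 opE_1; congr w; apply: ffE => j; rewrite !miE ueE.
  by case: ifP; rewrite addn0.
rewrite exprS opE_mul YopE IH; congr w.
apply: ffE => j; rewrite !miE !ueE; case: ifP => [/eqP ->|_]; last by rewrite !addn0.
by rewrite -addnA add1n.
Qed.

Definition msum (r : seq 'I_n) (c : 'I_n -> nat) : mi :=
  [ffun k => \sum_(j <- r) (if k == j then c j else 0)]%N.

Lemma msum_all (c : 'I_n -> nat) : msum (index_enum 'I_n) c = [ffun k => c k].
Proof.
apply: ffE => k; rewrite !ffunE -big_mkcond /=.
rewrite (eq_bigl (fun j => j == k)) ?big_pred1_eq // => j; exact: eq_sym.
Qed.

Lemma XprodE r c (w : V K n) h :
  (\prod_(j <- r) ((Xop K j : OV) ^+ c j)) w h = (mle (msum r c) h)%:R * w (msub h (msum r c)).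
Proof.
elim: r w h => [|j r IH] w h.
  rewrite big_nil opE_1.
  have -> : mle (msum [::] c) h by apply/forallP => k; rewrite ffunE big_nil.
  rewrite mul1r; congr w; apply: ffE => k; rewrite msubE ffunE big_nil subn0 //.
rewrite big_cons opE_mul XpowE IH.
have Sj k : msum (j :: r) c k = ((if k == j then c j else 0) + msum r c k)%N.
  by rewrite !ffunE big_cons.
case H: (c j <= h j)%N; last first.
  rewrite mul0r; have -> : mle (msum (j :: r) c) h = false.
    apply/negP => /forallP /(_ j); rewrite Sj eqxx => /(leq_trans (leq_addr _ _)).
    by rewrite H.
  by rewrite mul0r.
rewrite mul1r; have -> : mle (msum r c) (msub h (ue j (c j))) = mle (msum (j :: r) c) h.
  apply: eq_forallb => k; rewrite msubE ueE Sj leq_subRL //.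
  by case: ifP => [/eqP ->|]; rewrite ?H.
congr (_ * w _); apply: ffE => k; rewrite !msubE ueE Sj subnDA //.
Qed.

Definition msumY := msum.

Lemma YprodE r c (w : V K n) h :
  (\prod_(j <- r) ((Yop K j : OV) ^+ c j)) w h = w (madd h (msum r c)).
Proof.
elim: r w h => [|j r IH] w h.
  rewrite big_nil opE_1; congr w; apply: ffE => k; rewrite maddE ffunE big_nil addn0 //.
rewrite big_cons opE_mul YpowE IH; congr w.
by apply: ffE => k; rewrite !maddE ueE !ffunE big_cons addnA.
Qed.

Lemma eeE (j : 'I_n) (w : V K n) h :
  ((1 - (Xop K j : OV) * Yop K j) w) h = (h j == 0)%N%:R * w h.
Proof.
rewrite opE_add opE_1 opE_opp opE_mul fVE_add fVE_opp XopE YopE.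
case e: (h j) => [|m]; first by rewrite mul0r subr0 mul1r.
have -> : madd (msub h (uv j)) (uv j) = h.
  apply: ffE => k; rewrite !miE; case: ifP => [/eqP ->|]; rewrite ?e ?subn0 ?addn0 //.
  by rewrite subn1 addn1.
by rewrite /= mulr1n mulr0n mul1r mul0r subrr.
Qed.

Lemma eprodE r (w : V K n) h :
  (\prod_(j <- r) (1 - (Xop K j : OV) * Yop K j)) w h = (all (fun j => h j == 0)%N r)%:R * w h.
Proof.
elim: r w h => [|j r IH] w h; first by rewrite big_nil opE_1 mul1r.
by rewrite big_cons opE_mul eeE IH mulrA bRM.
Qed.

Lemma op_sum I (r : seq I) (F : I -> OV) (w : V K n) :
  (\sum_(i <- r) F i) w = \sum_(i <- r) F i w.
Proof.
elim: r => [|i r IH]; first by rewrite !big_nil opE_0.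
by rewrite !big_cons opE_add IH.
Qed.
Lemma V_sum I (r : seq I) (F : I -> V K n) h :
  (\sum_(i <- r) F i) h = \sum_(i <- r) F i h.
Proof.
elim: r => [|i r IH]; first by rewrite !big_nil fVE_0.
by rewrite !big_cons fVE_add IH.
Qed.
End RepF.

End T5.
Import T5.

Module T6.

Section Main.
Variables (K : fieldType) (n : nat) (A : algType K) (x y : 'I_n -> A).
Hypothesis presA : jacobson_presentation x y.
Local Notation mi := (mi n).
Local Notation OV := (OV K n).
Local Notation VV := (V K n).

Lemma relA : jacobson_rel x y. Proof. by case: presA. Qed.
Lemma yx i : y i * x i = 1. Proof. by case: relA. Qed.
Lemma xy_c i j : i != j -> x i * y j = y j * x i. Proof. by case: relA => _ /(_ i j) h /h []. Qed.
Lemma xx_c i j : x i * x j = x j * x i.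
Proof. by case: (eqVneq i j) => [->//|ij]; case: relA => _ /(_ i j ij) []. Qed.
Lemma yy_c i j : y i * y j = y j * y i.
Proof. by case: (eqVneq i j) => [->//|ij]; case: relA => _ /(_ i j ij) []. Qed.

Lemma rel_hom (B : algType K) (g : A -> B) : is_alg_hom g ->
  jacobson_rel (fun i => g (x i)) (fun i => g (y i)).
Proof.
move=> hg; split.
- by move=> i; rewrite -(ahM hg) yx (ah1 hg).
- move=> i j ij; split; rewrite -!(ahM hg).
  + by rewrite xy_c.
  + by rewrite xx_c.
  + by rewrite yy_c.
Qed.

Lemma hom_uniq (B : algType K) (g1 g2 : A -> B) : is_alg_hom g1 -> is_alg_hom g2 ->
  (forall i, g1 (x i) = g2 (x i) /\ g1 (y i) = g2 (y i)) -> forall a, g1 a = g2 a.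
Proof.
move=> h1 h2 e a; case: presA => _ /(_ B _ _ (rel_hom h1)) [f [hf _ hu]].
rewrite (hu g1 h1) ?(hu g2 h2) // => i; split; by case: (e i).
Qed.

Lemma hom_ex (B : algType K) (u v : 'I_n -> B) : jacobson_rel u v ->
  {f : A -> B | is_alg_hom f /\ forall i, f (x i) = u i /\ f (y i) = v i}.
Proof.
move=> r; apply: constructive_indefinite_description.
by case: presA => _ /(_ B u v r) [f [hf hx _]]; exists f.
Qed.

Definition rho : A -> OV := sval (hom_ex (rel_V K n)).
Lemma rho_hom : is_alg_hom rho. Proof. by case: (svalP (hom_ex (rel_V K n))). Qed.
Lemma rho_x i : rho (x i) = Xop K i. Proof. by case: (svalP (hom_ex (rel_V K n))) => _ /(_ i) []. Qed.
Lemma rho_y i : rho (y i) = Yop K i. Proof. by case: (svalP (hom_ex (rel_V K n))) => _ /(_ i) []. Qed.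

Definition XX (a : mi) : A := \prod_(j < n) x j ^+ a j.
Definition YY (b : mi) : A := \prod_(j < n) y j ^+ b j.
Definition ee : A := \prod_(j < n) (1 - x j * y j).
Definition EE (a b : mi) := XX a * ee * YY b.
Definition MM (a b : mi) := XX a * YY b.

Lemma rho_XX a (w : VV) h : rho (XX a) w h = (mle a h)%:R * w (msub h a).
Proof.
rewrite /XX (ah_prod rho_hom); under eq_bigr do rewrite (ahX rho_hom) rho_x.
rewrite XprodE msum_all; congr ((mle _ _)%:R * w (msub _ _)); apply: ffE => j; rewrite ffunE //.
Qed.
Lemma rho_YY b (w : VV) h : rho (YY b) w h = w (madd h b).
Proof.
rewrite /YY (ah_prod rho_hom); under eq_bigr do rewrite (ahX rho_hom) rho_y.
rewrite YprodE msum_all; congr (w (madd _ _)); apply: ffE => j; rewrite ffunE //.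
Qed.
Lemma rho_ee (w : VV) h : rho ee w h = (h == mzero n)%:R * w h.
Proof.
rewrite /ee (ah_prod rho_hom); under eq_bigr do rewrite (ahB rho_hom) (ah1 rho_hom) (ahM rho_hom) rho_x rho_y.
rewrite eprodE.
have -> : all (fun j => h j == 0)%N (index_enum 'I_n) = (h == mzero n).
  apply/idP/idP.
    by move/allP => H; apply/eqP/ffunP => j; rewrite ffunE; apply/eqP/H; rewrite mem_index_enum.
  by move/eqP => ->; apply/allP => j _; rewrite ffunE.
by [].
Qed.

Lemma rho_mul a b (w : VV) : rho (a * b) w = rho a (rho b w).
Proof. by rewrite (ahM rho_hom). Qed.

Lemma rho_EE a b (w : VV) h : rho (EE a b) w h = (h == a)%:R * w b.
Proof.
rewrite /EE !rho_mul rho_XX rho_ee rho_YY mulrA bRM.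
have -> : (mle a h && (msub h a == mzero n)) = (h == a).
  apply/andP/eqP => [[/forallP H /eqP E]|->].
    apply: ffE => j; apply/eqP; rewrite eqn_leq H andbT.
    by have := congr1 (fun f : mi => f j) E; rewrite !ffunE => /eqP; rewrite subn_eq0.
  split; first by apply/forallP.
  by apply/eqP/ffunP => j; rewrite !ffunE subnn.
case: eqP => [->|_]; last by rewrite !mul0r.
congr (_ * w _); apply: ffE => j; rewrite !ffunE subnn //.
Qed.

Lemma rho_MM a b (w : VV) h : rho (MM a b) w h = (mle a h)%:R * w (madd (msub h a) b).
Proof. by rewrite /MM rho_mul rho_XX rho_YY. Qed.

End Main.

End T6.
Import T6.

Module T7.

Section Main2.
Variables (K : fieldType) (n : nat) (A : algType K) (x y : 'I_n -> A).
Hypothesis presA : jacobson_presentation x y.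
Local Notation mi := (mi n).
Local Notation XX := (XX x).
Local Notation YY := (YY y).
Local Notation MM := (MM x y).

Lemma cXX i j a b : GRing.comm (x i ^+ a) (x j ^+ b).
Proof. by apply/commrX/commr_sym/commrX; exact: (xx_c presA). Qed.
Lemma cYY i j a b : GRing.comm (y i ^+ a) (y j ^+ b).
Proof. by apply/commrX/commr_sym/commrX; exact: (yy_c presA). Qed.

Lemma prod_unit (z : 'I_n -> A) i : \prod_(j < n) z j ^+ (uv i j) = z i.
Proof.
rewrite (eq_bigr (fun j => if j == i then z j else 1)); last first.
  by move=> j _; rewrite uvE; case: ifP; rewrite ?expr1 ?expr0.
by rewrite -big_mkcond big_pred1_eq.
Qed.

Lemma XX_add (a : mi) i : XX (madd a (uv i)) = x i * XX a.
Proof.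
rewrite /T6.XX (eq_bigr (fun j => x j ^+ a j * x j ^+ uv i j)); last first.
  by move=> j _; rewrite maddE exprD.
rewrite prodrM_comm; last by move=> ? ? _ _; exact: cXX.
rewrite prod_unit; apply/esym/commr_prod => j _; apply/commr_sym; rewrite -[x i]expr1; exact: cXX.
Qed.
Lemma YY_add (b : mi) i : YY (madd b (uv i)) = y i * YY b.
Proof.
rewrite /T6.YY (eq_bigr (fun j => y j ^+ b j * y j ^+ uv i j)); last first.
  by move=> j _; rewrite maddE exprD.
rewrite prodrM_comm; last by move=> ? ? _ _; exact: cYY.
rewrite prod_unit; apply/esym/commr_prod => j _; apply/commr_sym; rewrite -[y i]expr1; exact: cYY.
Qed.

Lemma y_XX0 (a : mi) i : a i = 0%N -> y i * XX a = XX a * y i.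
Proof.
move=> a0; apply: commr_prod => j _; case: (eqVneq j i) => [->|ji].
  by rewrite a0 expr0; exact: commr1.
by apply: commrX; rewrite /GRing.comm (xy_c presA ji).
Qed.

Lemma y_XXS (a : mi) i : (0 < a i)%N -> y i * XX a = XX (msub a (uv i)).
Proof.
move=> ai; have -> : a = madd (msub a (uv i)) (uv i).
  apply: ffE => j; rewrite !miE; case: ifP => [/eqP ->|]; rewrite ?subn0 ?addn0 // subnK //.
rewrite XX_add mulrA (yx presA) mul1r; congr XX.
by apply: ffE => j; rewrite !miE; case: ifP; rewrite ?addnK ?subn0 ?addn0.
Qed.

Lemma x_MM i (a b : mi) : x i * MM a b = MM (madd a (uv i)) b.
Proof. by rewrite /T6.MM mulrA XX_add. Qed.

Definition stepY (i : 'I_n) (p : mi * mi) : mi * mi :=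
  if (0 < p.1 i)%N then (msub p.1 (uv i), p.2) else (p.1, madd p.2 (uv i)).

Lemma y_MM i (p : mi * mi) : y i * MM p.1 p.2 = MM (stepY i p).1 (stepY i p).2.
Proof.
rewrite /stepY /T6.MM mulrA; case: ifP => h /=; first by rewrite y_XXS.
by rewrite y_XX0 ?YY_add ?mulrA //; apply/eqP; rewrite eqn0Ngt h.
Qed.

Definition Span (a : A) : Prop :=
  exists s : seq (K * (mi * mi)), a = \sum_(q <- s) q.1 *: MM q.2.1 q.2.2.

Lemma hS : goodP Span.
Proof.
split.
- by exists [::]; rewrite big_nil.
- by move=> u v [s1 ->] [s2 ->]; exists (s1 ++ s2); rewrite big_cat.
- move=> k u [s ->]; exists (map (fun q => (k * q.1, q.2)) s).
  by rewrite big_map scaler_sumr; apply: eq_bigr => q _; rewrite scalerA.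
- by exists 1; exact: oner_neq0.
Qed.

Lemma hTA : goodP (fun _ : A => True).
Proof. by split=> //; exists 1; exact: oner_neq0. Qed.

Lemma Llin (a : A) k u v : a * (k *: u + v) = k *: (a * u) + a * v.
Proof. by rewrite mulrDr scalerAr. Qed.

Definition Lx (i : 'I_n) : op hS.
refine (@Op _ _ _ hS (fun a => x i * a) (Llin (x i)) _).
move=> w [s ->]; exists (map (fun q => (q.1, (madd q.2.1 (uv i), q.2.2))) s).
rewrite big_map mulr_sumr; apply: eq_bigr => q _; by rewrite -scalerAr x_MM.
Defined.
Definition Ly (i : 'I_n) : op hS.
refine (@Op _ _ _ hS (fun a => y i * a) (Llin (y i)) _).
move=> w [s ->]; exists (map (fun q => (q.1, stepY i q.2)) s).
rewrite big_map mulr_sumr; apply: eq_bigr => q _; by rewrite -scalerAr y_MM.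
Defined.

Lemma rel_L : jacobson_rel Lx Ly.
Proof.
split.
- by move=> i; apply: op_ext => w /=; rewrite ?opE_mul /= mulrA (yx presA) mul1r.
- move=> i j ij; split; apply: op_ext => w; rewrite ?opE_mul /= !mulrA.
  + by rewrite (xy_c presA ij).
  + by rewrite (xx_c presA).
  + by rewrite (yy_c presA).
Qed.

Definition LA (a : A) : op hTA := @Op _ _ _ hTA (fun b => a * b) (Llin a) (fun _ _ => I).
Lemma LA_hom : is_alg_hom LA.
Proof.
split; last split.
- by move=> k a b; apply: op_ext => w /=; rewrite ?opE_add ?opE_scale /= mulrDl scalerAl.
- by move=> a b; apply: op_ext => w /=; rewrite ?opE_mul /= mulrA.
- by apply: op_ext => w /=; rewrite mul1r.
Qed.

Definition Fg (f : op hS) : op hTA := @Op _ _ _ hTA (app f) (@app_lin _ _ _ _ f) (fun _ _ => I).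
Lemma Fg_hom : is_alg_hom Fg.
Proof. by split; last split; move=> *; apply: op_ext. Qed.

Lemma spanning (a : A) : Span a.
Proof.
case: (hom_ex presA rel_L) => psi [hpsi hx].
have E := hom_uniq presA (ah_comp Fg_hom hpsi) LA_hom.
have Hg : forall i, Fg (psi (x i)) = LA (x i) /\ Fg (psi (y i)) = LA (y i).
  by move=> i; case: (hx i) => -> ->; split; apply: op_ext.
have -> : a = app (psi a) 1.
  by have := E Hg a => /(congr1 (fun f : op hTA => app f 1)) /= ->; rewrite mulr1.
apply: app_P; exists [:: (1, (mzero n, mzero n))]; rewrite big_cons big_nil addr0 scale1r.
by rewrite /T6.MM /T6.XX /T6.YY !big1 ?mulr1 // => j _; rewrite ffunE expr0.
Qed.
End Main2.

End T7.
Import T7.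

Module T8.

Lemma seq_min (T : eqType) (f : T -> nat) (s : seq T) : s != [::] ->
  exists2 q0, q0 \in s & forall q, q \in s -> (f q0 <= f q)%N.
Proof.
elim: s => [//|a s IH] _; case: (eqVneq s [::]) => [->|/IH [q1 q1s H1]].
  by exists a; rewrite ?mem_seq1 // => q; rewrite mem_seq1 => /eqP ->.
case: (leqP (f a) (f q1)) => h.
  exists a; first exact: mem_head.
  by move=> q; rewrite in_cons => /orP [/eqP ->//|/H1]; apply: leq_trans.
exists q1; first by rewrite in_cons q1s orbT.
by move=> q; rewrite in_cons => /orP [/eqP ->|/H1//]; apply: ltnW.
Qed.

Section Main3.
Variables (K : fieldType) (n : nat) (A : algType K) (x y : 'I_n -> A).
Hypothesis presA : jacobson_presentation x y.
Local Notation mi := (mi n).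
Local Notation MM := (MM x y).
Local Notation rho := (rho presA).
Local Notation VV := (V K n).

Definition wt (b : mi) : nat := (\sum_(j < n) b j)%N.
Lemma wt_add (a b : mi) : wt (madd a b) = (wt a + wt b)%N.
Proof. by rewrite /wt -big_split; apply: eq_bigr => j _; rewrite maddE. Qed.

Definition SUM (s : seq (K * (mi * mi))) : A := \sum_(q <- s) q.1 *: MM q.2.1 q.2.2.

Lemma rho_SUM s (g h : mi) : rho (SUM s) (dl K g) h =
  \sum_(q <- s) q.1 * (mle q.2.1 h && (madd (msub h q.2.1) q.2.2 == g))%:R.
Proof.
rewrite /SUM (ah_sum (rho_hom presA)) op_sum V_sum; apply: eq_bigr => q _.
by rewrite (ahZ (rho_hom presA)) opE_scale fVE_scale rho_MM /dl bRM.
Qed.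

Lemma faith_seq m (s : seq (K * (mi * mi))) : (size s <= m)%N ->
  (forall g, rho (SUM s) (dl K g) = 0) -> SUM s = 0.
Proof.
elim: m s => [|m IH] s.
  by rewrite leqn0 => /nilP -> _; rewrite /SUM big_nil.
move=> sz H; case: (eqVneq s [::]) => [->|sn0]; first by rewrite /SUM big_nil.
have [q0 q0s Hmin] := seq_min (fun q : K * (mi * mi) => wt q.2.2) sn0.
set P := fun q : K * (mi * mi) => q.2 == q0.2.
have C : forall q, q \in s -> (mle q.2.1 q0.2.1 && (madd (msub q0.2.1 q.2.1) q.2.2 == q0.2.2)) = P q.
  move=> q qs; rewrite /P; apply/andP/eqP => [[/forallP le /eqP E]|->]; last first.
    split; first by apply/forallP.
    by apply/eqP/ffunP => j; rewrite !ffunE subnn.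
  have W := Hmin q qs; rewrite /= -E wt_add in W.
  have W0 : wt (msub q0.2.1 q.2.1) = 0%N.
    by have := leq_sub2r (wt q.2.2) W; rewrite addnK subnn leqn0 => /eqP.
  have e1 : q.2.1 = q0.2.1.
    apply: ffE => j; apply/eqP; rewrite eqn_leq le /=.
    move: W0 => /eqP; rewrite /wt sum_nat_eq0 => /forallP /(_ j) /=.
    by rewrite msubE subn_eq0.
  have e2 : q.2.2 = q0.2.2.
    rewrite -E e1; apply: ffE => j; by rewrite maddE msubE subnn.
  by move: e1 e2; case: (q.2) => b c; case: (q0.2) => b0 c0 /= -> ->.
have S0 : \sum_(q <- s | P q) q.1 = 0.
  have := H q0.2.2; move/(congr1 (fun f : VV => f q0.2.1)); rewrite rho_SUM fVE_0.
  move=> H0; rewrite big_mkcond -[X in _ = X]H0; apply: eq_big_seq => q qs; rewrite /= C //.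
  by case: (P q); rewrite ?mulr1 ?mulr0.
have E : SUM s = SUM (filter (predC P) s).
  rewrite /SUM big_filter [LHS](bigID P) /=.
  rewrite [X in X + _](eq_bigr (fun q => q.1 *: MM q0.2.1 q0.2.2)); last first.
    by move=> q /eqP ->.
  by rewrite -scaler_suml S0 scale0r add0r.
rewrite E; apply: IH; last by move=> g; rewrite -E.
have lt : (count (predC P) s < size s)%N.
  rewrite -(count_predC P s) addnC -{1}[count (predC P) s]addn0 ltn_add2l -has_count.
  by apply/hasP; exists q0; rewrite //= /P.
by rewrite size_filter -ltnS (leq_trans lt sz).
Qed.

Lemma faith (a : A) : (forall g, rho a (dl K g) = 0) -> a = 0.
Proof.
case: (spanning presA a) => s ->; exact: (@faith_seq (size s) s (leqnn _)).
Qed.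
End Main3.

End T8.
Import T8.

Module T9.

Section Main4.
Variables (K : fieldType) (n : nat) (A : algType K) (x y : 'I_n -> A).
Hypothesis presA : jacobson_presentation x y.
Hypothesis n_gt0 : (0 < n)%N.
Local Notation mi := (mi n).
Local Notation EE := (EE x y).
Local Notation rho := (rho presA).
Local Notation VV := (V K n).
Local Notation dl := (dl K).

Definition i0 : 'I_n := Ordinal n_gt0.

Lemma mneq (u v : mi) : (v i0 < u i0)%N -> u != v.
Proof. by move=> h; apply/eqP => e; rewrite e ltnn in h. Qed.

Lemma rho_EEf (a b : mi) (w : VV) : rho (EE a b) w = w b *: dl a.
Proof. by apply: functional_extensionality => h; rewrite rho_EE fVE_scale /dl mulrC. Qed.

Lemma dl_neq (a b : mi) : a != b -> dl a b = 0.
Proof. by rewrite /dl eq_sym => /negbTE ->. Qed.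
Lemma dl_eq (a : mi) : dl a a = 1.
Proof. by rewrite /dl eqxx. Qed.

Lemma rhoB (a b : A) (w : VV) : rho (a - b) w = rho a w - rho b w.
Proof. by rewrite (ahB (rho_hom presA)). Qed.
Lemma rhoZ k (a : A) (w : VV) : rho (k *: a) w = k *: rho a w.
Proof. by rewrite (ahZ (rho_hom presA)). Qed.

Lemma EE_neq0 (a b : mi) : EE a b != 0.
Proof.
apply/eqP => e; have := congr1 (fun f : A => rho f (dl b) a) e.
rewrite rho_EEf fVE_scale !dl_eq mulr1 (ah0 (rho_hom presA)) opE_0 fVE_0.
by move/eqP; rewrite oner_eq0.
Qed.

Lemma EE_sq (a b : mi) : a != b -> EE a b * EE a b = 0.
Proof.
move=> ab; apply: (@faith _ _ _ _ _ presA) => g; apply: functional_extensionality => h.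
by rewrite rho_mul !rho_EEf !fVE_scale (dl_neq ab) !(mulr0, mul0r) fVE_0.
Qed.

Lemma centE (z : A) : (forall a b : mi, a != b -> z * EE a b = EE a b * z) ->
  exists c : K, z = c%:A.
Proof.
move=> cz; pose d b := rho z (dl b) b.
have key : forall a b, a != b -> rho z (dl a) = d b *: dl a.
  move=> a b ab; have E : dl a = rho (EE a b) (dl b) by rewrite rho_EEf dl_eq scale1r.
  by rewrite {1}E -rho_mul cz // rho_mul rho_EEf.
have dc : forall a b, a != b -> d a = d b.
  by move=> a b ab; rewrite {1}/d (key a b ab) fVE_scale dl_eq mulr1.
exists (d (mzero n)); apply/eqP; rewrite -subr_eq0; apply/eqP; apply: (@faith _ _ _ _ _ presA) => g.
rewrite rhoB (ahA (rho_hom presA)) opE_scale opE_1.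
have g0 : uv i0 != mzero n by apply: mneq; rewrite !ffunE eqxx.
case: (eqVneq g (mzero n)) => [->|gn].
  have g0' : mzero n != uv i0 by rewrite eq_sym.
  by rewrite (key _ _ g0') (dc _ _ g0) subrr.
by rewrite (key _ _ gn) subrr.
Qed.

Lemma EaE (g h a b : mi) (a0 : A) :
  EE g h * a0 * EE a b = (rho a0 (dl a) h) *: EE g b.
Proof.
apply/eqP; rewrite -subr_eq0; apply/eqP; apply: (@faith _ _ _ _ _ presA) => t.
apply: functional_extensionality => k.
rewrite rhoB (rho_mul presA (EE g h * a0)) (rho_mul presA (EE g h)) rhoZ !rho_EEf app_scale !fVE_add fVE_opp !fVE_scale fVE_0.
by rewrite mulrCA mulrA subrr.
Qed.

Lemma fixE (s : A -> A) : is_alg_hom s ->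
  (forall a b : mi, a != b -> s (EE a b) = EE a b) -> forall a0, s a0 = a0.
Proof.
move=> hs fE a0; apply/eqP; rewrite -subr_eq0; apply/eqP; apply: (@faith _ _ _ _ _ presA) => a.
apply: functional_extensionality => h; rewrite rhoB fVE_add fVE_opp fVE_0; apply/eqP.
rewrite subr_eq0; apply/eqP.
pose b := madd a (uv i0); pose g := madd (madd h b) (uv i0).
have ab : a != b by apply/eqP => e; have := congr1 (fun f : mi => f i0) e; rewrite /b !ffunE eqxx addn1 => /n_Sn.
have gh : g != h by apply: mneq; rewrite /g !ffunE eqxx [X in (_ < X)%N]addn1 ltnS leq_addr.
have gb : g != b by apply: mneq; rewrite /g /b !ffunE eqxx [X in (_ < X)%N]addn1 ltnS leq_addl.
have E1 := EaE g h a b (s a0).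
have E2 : EE g h * s a0 * EE a b = rho a0 (dl a) h *: EE g b.
  by rewrite -(fE g h gh) -(fE a b ab) -!(ahM hs) EaE (ahZ hs) fE.
have : (rho (s a0) (dl a) h - rho a0 (dl a) h) *: EE g b = 0 by rewrite scalerBl -E1 -E2 subrr.
by move/eqP; rewrite scaler_eq0 (negbTE (EE_neq0 g b)) orbF subr_eq0 => /eqP.
Qed.

Lemma autU (s : A -> A) : is_alg_hom s -> bijective s ->
  (forall w w' : A, w * w' = 1 -> w' * w = 1 -> forall a, s (w * a * w') = w * s a * w') ->
  forall a, s a = a.
Proof.
move=> hs [si sK Ks] hc; apply: fixE => // a b ab.
set N := EE a b; have NN : N * N = 0 by exact: EE_sq.
pose w := 1 + N; pose w' := 1 - N.
have ww' : w * w' = 1 by rewrite /w /w' mulrDl mul1r mulrBr mulr1 NN subr0 subrK.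
have w'w : w' * w = 1 by rewrite /w /w' mulrBl mul1r mulrDr mulr1 NN addr0 addrK.
have sww : s w * s w' = 1 by rewrite -(ahM hs) ww' (ah1 hs).
have sw'w : s w' * s w = 1 by rewrite -(ahM hs) w'w (ah1 hs).
have gc : forall c, (w' * s w) * c = c * (w' * s w).
  move=> c; rewrite -(Ks c); set c0 := si c.
  have H := hc w w' ww' w'w c0; rewrite !(ahM hs) in H.
  rewrite -mulrA -[s w * s c0]mulr1 -sw'w [s w * s c0 * _]mulrA H.
  by rewrite !mulrA w'w mul1r.
have [k gk] := centE (fun a b _ => gc (EE a b)).
have sw : s w = k *: w.
  by rewrite -[s w]mul1r -ww' -mulrA gk mulr_algr.
have sN : s N = k *: w - 1 by rewrite -sw /w (ahD hs) (ah1 hs) [1 + s N]addrC addrK.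
have tN : s N * N = (k - 1) *: N.
  by rewrite sN mulrBl mul1r -scalerAl /w mulrDl mul1r NN addr0 scalerBl scale1r.
have : (k - 1) ^+ 2 *: N = 0.
  by rewrite expr2 -scalerA -tN scalerAr -tN mulrA -(ahM hs) NN (ah0 hs) mul0r.
move/eqP; rewrite scaler_eq0 (negbTE (EE_neq0 a b)) orbF expf_eq0 /= subr_eq0 => /eqP k1.
by rewrite sN k1 scale1r /w [1 + N]addrC addrK.
Qed.
End Main4.

End T9.
Import T9.

Module T10.

Section Gen.
Variables (K : fieldType) (A : algType K).

Lemma autom_comp (p q s : A -> A) : is_autom p -> is_autom q ->
  (forall a, s a = p (q a)) -> is_autom s.
Proof.
move=> [hp [pi pK Kp]] [hq [qi qK Kq]] e; split.
  by apply: (ah_ext (ah_comp hp hq)).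
by exists (fun a => qi (pi a)) => a; rewrite ?e ?pK ?qK ?Kq ?Kp.
Qed.

Lemma autom_id (s : A -> A) : (forall a, s a = a) -> is_autom s.
Proof.
move=> e; split; first exact: (ah_ext (@ah_id K A)).
by exists (fun a => a) => a; rewrite e.
Qed.

Lemma conj_hom (w w' : A) : w * w' = 1 -> w' * w = 1 -> is_alg_hom (fun a => w * a * w').
Proof.
move=> ww' w'w; split; last split.
- by move=> k a b; rewrite mulrDr mulrDl -scalerAr -scalerAl.
- by move=> a b; rewrite -!mulrA [w' * (w * _)]mulrA w'w mul1r.
- by rewrite mulr1.
Qed.

Lemma conj_autom (w w' : A) (s : A -> A) : w * w' = 1 -> w' * w = 1 ->
  (forall a, s a = w * a * w') -> is_autom s.
Proof.
move=> ww' w'w e; split; first exact: (ah_ext (conj_hom ww' w'w)).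
exists (fun a => w' * a * w) => a; rewrite ?e.
  by rewrite !mulrA w'w mul1r -mulrA w'w mulr1.
by rewrite !mulrA ww' mul1r -mulrA ww' mulr1.
Qed.

Lemma inn_autom (s : A -> A) : in_inn s -> is_autom s.
Proof. by case=> u [v [uv vu e]]; exact: (conj_autom uv vu e). Qed.

Lemma inn_conj (w w' : A) : w * w' = 1 -> w' * w = 1 -> in_inn (fun a => w * a * w').
Proof. by move=> ww' w'w; exists w, w'. Qed.

Lemma inn_id (s : A -> A) : (forall a, s a = a) -> in_inn s.
Proof. by move=> e; exists 1, 1; split; rewrite ?mulr1 // => a; rewrite e mul1r mulr1. Qed.

Lemma prod_autom (P Q : (A -> A) -> Prop) : (forall p, P p -> is_autom p) ->
  (forall q, Q q -> is_autom q) -> forall s, prod_set P Q s -> is_autom s.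
Proof. by move=> hP hQ s [p [q [Pp Qq e]]]; exact: (autom_comp (hP _ Pp) (hQ _ Qq) e). Qed.
End Gen.

Section Final.
Variables (K : fieldType) (n : nat) (A : algType K) (x y : 'I_n -> A).
Hypothesis presA : jacobson_presentation x y.
Hypothesis n_gt0 : (0 < n)%N.

Lemma triv_gen (H : (A -> A) -> Prop) : (forall s, H s -> is_autom s) ->
  (forall s, (forall a, s a = a) -> H s) ->
  (forall w w', w * w' = 1 -> w' * w = 1 -> H (fun a => w * a * w')) -> trivial_centre H.
Proof.
move=> Ha Hid Hc s; split.
  move=> [Hs cs]; case: (Ha s Hs) => hs bs.
  apply: (autU presA n_gt0 hs bs) => w w' ww' w'w a.
  exact: (cs _ (Hc w w' ww' w'w)).
move=> e; split; first exact: Hid.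
by move=> t _ a; rewrite !e.
Qed.

Lemma torus_id (s : A -> A) : (forall a, s a = a) -> in_torus x y s.
Proof.
move=> e; split; first exact: autom_id.
by exists (fun _ => 1); split=> [i|i]; rewrite ?oner_eq0 // !e invr1 !scale1r.
Qed.

Lemma sym_id (s : A -> A) : (forall a, s a = a) -> in_sym x y s.
Proof. by move=> e; split; [exact: autom_id | exists 1%g => i; rewrite !e perm1]. Qed.

Lemma prod_id (P Q : (A -> A) -> Prop) (s : A -> A) :
  P (fun a => a) -> Q (fun a => a) -> (forall a, s a = a) -> prod_set P Q s.
Proof. by move=> hP hQ e; exists (fun a => a), (fun a => a). Qed.

Lemma part1 : trivial_centre (@is_autom K A).
Proof.
apply: triv_gen => //; first exact: autom_id.
by move=> w w' ww' w'w; exact: (conj_autom ww' w'w).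
Qed.

Lemma part2 : trivial_centre (prod_set (in_torus x y) (@in_inn K A)).
Proof.
apply: triv_gen.
- by apply: prod_autom => [p []|q /inn_autom].
- by move=> s e; apply: prod_id => //; [exact: torus_id | exact: inn_id].
- move=> w w' ww' w'w; exists (fun a => a), (fun a => w * a * w'); split=> //.
  + exact: torus_id.
  + exact: inn_conj.
Qed.

Lemma part3 : trivial_centre (@in_inn K A).
Proof.
apply: triv_gen.
- exact: inn_autom.
- exact: inn_id.
- exact: inn_conj.
Qed.

Lemma part5 : trivial_centre (prod_set (in_sym x y) (@in_inn K A)).
Proof.
apply: triv_gen.
- by apply: prod_autom => [p []|q /inn_autom].
- by move=> s e; apply: prod_id => //; [exact: sym_id | exact: inn_id].
- move=> w w' ww' w'w; exists (fun a => a), (fun a => w * a * w'); split=> //.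
  + exact: sym_id.
  + exact: inn_conj.
Qed.
End Final.

End T10.
Import T10.

Module T11.

Section Part4.
Variables (K : fieldType) (n : nat) (A : algType K) (x y : 'I_n -> A).
Hypothesis presA : jacobson_presentation x y.
Hypothesis n_gt0 : (0 < n)%N.
Hypothesis charK0 : [pchar K] =i pred0.

Lemma scMM (a b : K) (u v : A) : (a *: u) * (b *: v) = (a * b) *: (u * v).
Proof. by rewrite -scalerAl -scalerAr scalerA. Qed.

Lemma autom_of (f g : A -> A) : is_alg_hom f -> is_alg_hom g ->
  (forall i, f (g (x i)) = x i /\ f (g (y i)) = y i) ->
  (forall i, g (f (x i)) = x i /\ g (f (y i)) = y i) -> is_autom f.
Proof.
move=> hf hg e1 e2; split=> //; exists g => a.
  by apply: (hom_uniq presA (ah_comp hg hf) (@ah_id K A)).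
by apply: (hom_uniq presA (ah_comp hf hg) (@ah_id K A)).
Qed.

Lemma tor_hom (mu : 'I_n -> K) : (forall i, mu i != 0) ->
  {t : A -> A | is_alg_hom t /\ forall i, t (x i) = mu i *: x i /\ t (y i) = (mu i)^-1 *: y i}.
Proof.
move=> mu0; apply: hom_ex => //; split.
- by move=> i; rewrite scMM mulVf // (yx presA) scale1r.
- move=> i j ij; split; rewrite !scMM mulrC.
  + by rewrite (xy_c presA ij).
  + by rewrite (xx_c presA).
  + by rewrite (yy_c presA).
Qed.

Lemma tor_autom (mu : 'I_n -> K) : (forall i, mu i != 0) ->
  exists t, in_torus x y t /\ forall i, t (x i) = mu i *: x i /\ t (y i) = (mu i)^-1 *: y i.
Proof.
move=> mu0; have mu0' : forall i, (mu i)^-1 != 0 by move=> i; rewrite invr_eq0.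
case: (tor_hom mu0) => t [ht et]; case: (tor_hom mu0') => t' [ht' et'].
exists t; split=> //; split; last by exists mu.
apply: (autom_of ht ht') => i; case: (et i) => ex ey; case: (et' i) => ex' ey'.
  by rewrite ex' ey' (ahZ ht) (ahZ ht) ex ey !scalerA invrK mulVf ?mulfV ?scale1r.
by rewrite ex ey (ahZ ht') (ahZ ht') ex' ey' !scalerA invrK mulVf ?mulfV ?scale1r.
Qed.

Lemma sym_hom (p : 'S_n) :
  {t : A -> A | is_alg_hom t /\ forall i, t (x i) = x (p i) /\ t (y i) = y (p i)}.
Proof.
apply: hom_ex => //; split.
- by move=> i; rewrite (yx presA).
- move=> i j ij; have pij : p i != p j by rewrite (inj_eq perm_inj).
  split.
  + by rewrite (xy_c presA pij).
  + by rewrite (xx_c presA).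
  + by rewrite (yy_c presA).
Qed.

Lemma sym_autom (p : 'S_n) :
  exists t, in_sym x y t /\ forall i, t (x i) = x (p i) /\ t (y i) = y (p i).
Proof.
case: (sym_hom p) => t [ht et]; case: (sym_hom p^-1) => t' [ht' et'].
exists t; split=> //; split; last by exists p.
apply: (autom_of ht ht') => i; case: (et i) => ex ey; case: (et' i) => ex' ey'.
  by rewrite ex' ey'; case: (et ((p^-1)%g i)) => -> ->; rewrite permKV.
by rewrite ex ey; case: (et' (p i)) => -> ->; rewrite permK.
Qed.

Lemma x_neq0 i : x i != 0.
Proof. by apply/eqP => e; have := yx presA i; rewrite e mulr0 => /eqP; rewrite eq_sym oner_eq0. Qed.

Lemma scale_inj (a b : K) (u : A) : u != 0 -> a *: u = b *: u -> a = b.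
Proof.
move=> u0 e; apply/eqP; rewrite -subr_eq0; apply/eqP.
have : (a - b) *: u = 0 by rewrite scalerBl e subrr.
by move/eqP; rewrite scaler_eq0 (negbTE u0) orbF => /eqP.
Qed.

Lemma two_neq0 : (2%:R : K) != 0.
Proof. by move/pcharf0P: charK0 => ->. Qed.

Lemma part4 (s : A -> A) :
  in_centre (prod_set (in_sym x y) (in_torus x y)) s <->
  is_autom s /\ exists lam : K, lam != 0 /\
    forall i, s (x i) = lam *: x i /\ s (y i) = lam^-1 *: y i.
Proof.
split.
  move=> [[p [q [[hp [pi ep]] [hq [lam [lam0 eq]]] e]]] cs].
  have As : is_autom s by apply: (autom_comp hp hq e).
  have [hps _] := hp.
  have sx : forall i, s (x i) = lam i *: x (pi i).
    by move=> i; rewrite e; case: (eq i) => -> _; rewrite (ahZ hps); case: (ep i) => -> _.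
  have sy : forall i, s (y i) = (lam i)^-1 *: y (pi i).
    by move=> i; rewrite e; case: (eq i) => _ ->; rewrite (ahZ hps); case: (ep i) => _ ->.
  have pid : forall i, pi i = i.
    move=> i; apply/eqP/negPn/negP => pii.
    pose mu := fun j => if j == i then 2%:R else 1 : K.
    have mu0 : forall j, mu j != 0 by move=> j; rewrite /mu; case: ifP => _; rewrite ?two_neq0 ?oner_eq0.
    have [t [Tt et]] := tor_autom mu0.
    have Ht : prod_set (in_sym x y) (in_torus x y) t.
      by exists (fun a => a), t; split=> //; exact: sym_id.
    have := cs t Ht (x i); rewrite sx; case: (et i) => -> _; rewrite (ahZ (proj1 As)) sx.
    case: Tt => [[ht _] _]; rewrite (ahZ ht); case: (et (pi i)) => -> _.
    rewrite /mu eqxx (negbTE pii) !scalerA mulr1 => /(scale_inj (x_neq0 (pi i))).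
    rewrite mulr_natl mulr2n => /(congr1 (fun z => z - lam i)); rewrite addrK subrr => /eqP.
    by rewrite (negbTE (lam0 i)).
  have sx' : forall i, s (x i) = lam i *: x i by move=> i; rewrite sx pid.
  have sy' : forall i, s (y i) = (lam i)^-1 *: y i by move=> i; rewrite sy pid.
  pose j0 : 'I_n := Ordinal n_gt0.
  have lc : forall i, lam i = lam j0.
    move=> i; have [t [Tt et]] := sym_autom (tperm j0 i).
    have Ht : prod_set (in_sym x y) (in_torus x y) t.
      by exists t, (fun a => a); split=> //; exact: torus_id.
    have := cs t Ht (x j0); case: (et j0) => -> _; rewrite tpermL !sx' (ahZ (proj1 (proj1 Tt))).
    by case: (et j0) => -> _; rewrite tpermL => /(scale_inj (x_neq0 i)).
  split=> //; exists (lam j0); split; first exact: lam0.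
  by move=> i; rewrite sx' sy' lc.
move=> [As [lam [lam0 e]]]; have hs := proj1 As; split.
  exists (fun a => a), s; split=> //; first exact: sym_id.
  by split=> //; exists (fun _ => lam).
move=> t [p [q [[[hp _] [pi ep]] [[hq _] [mu [mu0 eq]]] et]]] a.
have ht : is_alg_hom t by apply: (ah_ext (ah_comp hp hq)).
apply: (hom_uniq presA (ah_comp hs ht) (ah_comp ht hs)) => i.
case: (e i) => ex ey; case: (eq i) => qx qy; case: (ep i) => px py.
case: (e (pi i)) => ex' ey'.
split.
  have -> : s (t (x i)) = mu i *: (lam *: x (pi i)) by rewrite et qx (ahZ hp) px (ahZ hs) ex'.
  have -> : t (s (x i)) = lam *: (mu i *: x (pi i)) by rewrite ex (ahZ ht) et qx (ahZ hp) px.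
  by rewrite !scalerA mulrC.
have -> : s (t (y i)) = (mu i)^-1 *: (lam^-1 *: y (pi i)) by rewrite et qy (ahZ hp) py (ahZ hs) ey'.
have -> : t (s (y i)) = lam^-1 *: ((mu i)^-1 *: y (pi i)) by rewrite ey (ahZ ht) et qy (ahZ hp) py.
by rewrite !scalerA mulrC.
Qed.
End Part4.

End T11.
Import T11.

Theorem corollary5p6 (K : fieldType) (charK0 : [pchar K] =i pred0)
  (n : nat) (n_gt0 : (0 < n)%N)
  (A : algType K) (x y : 'I_n -> A) (presA : jacobson_presentation x y) :
  [/\ (* (1) Z(G_n) = {e} *)
      trivial_centre (@is_autom K A),
      (* (2) Z(T^n ⋉ Inn(S_n)) = {e} *)
      trivial_centre (prod_set (in_torus x y) (@in_inn K A)),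
      (* (3) Z(Inn(S_n)) = {e} *)
      trivial_centre (@in_inn K A),
      (* (4) Z(S_n ⋉ T^n) = { t_(lambda,...,lambda) | lambda in K^* } *)
      (forall s : A -> A,
         in_centre (prod_set (in_sym x y) (in_torus x y)) s <->
         is_autom s /\ exists lam : K, lam != 0 /\
           forall i, s (x i) = lam *: x i /\ s (y i) = lam^-1 *: y i)
    & (* (5) Z(S_n ⋉ Inn(S_n)) = {e} *)
      trivial_centre (prod_set (in_sym x y) (@in_inn K A))].
Proof.
split.
- exact: (part1 presA n_gt0).
- exact: (part2 presA n_gt0).
- exact: (part3 presA n_gt0).
- by move=> s; apply: (part4 presA n_gt0 charK0).
- exact: (part5 presA n_gt0).
Qed.
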